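(* Let $\mathscr{H}$ be a complex Hilbert space and let $N(\cdot)$ be a norm on $\mathbb{B}(\mathscr{H})$ which is an algebra norm ($N(XY)\leq N(X)N(Y)$ for all $X,Y$) and self-adjoint ($N(X^* )=N(X)$ for all $X$). Then for all $B,C\in\mathbb{B}(\mathscr{H})$, $$\frac18N(C^*C+B^*B)+\frac12\max\{w_N(B+C),w_N(B-C)\}\,|w_N(B)-w_N(C)|\leq w_{(N,e)}^2(B,C).$$
   Context: For $T\in\mathbb{B}(\mathscr{H})$: $\Re(T)=\frac12(T+T^* )$ and $w_N(T)=\sup_{\theta\in\mathbb{R}}N(\Re(e^{i\theta}T))$. For $B,C\in\mathbb{B}(\mathscr{H})$, $w_{(N,e)}(B,C)=\sup_{\lambda_1,\lambda_2\in\mathbb{C},\ |\lambda_1|^2+|\lambda_2|^2\leq 1}\sup_{\theta\in\mathbb{R}} N(\Re(e^{i\theta}(\lambda_1B+\lambda_2C)))$. *)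

(* Defs.v *)
From HB Require Import structures.
From mathcomp Require Import all_boot all_order all_algebra.
From mathcomp Require Import boolp classical_sets reals trigo.
From mathcomp Require Import complex.
From Stdlib Require Import ClassicalEpsilon.

Set Implicit Arguments. Unset Strict Implicit. Unset Printing Implicit Defensive.
Import Order.TTheory GRing.Theory Num.Theory.
Local Open Scope ring_scope.

Section Hilbert.
Variables (R : realType) (H : lmodType R[i]) (ip : H -> H -> R[i]).

Definition hnorm (x : H) : R := Num.sqrt (complex.Re (ip x x)).

Record is_hilbert : Prop := IsHilbert {
  ip_linear : forall (a : R[i]) (x y z : H), ip (a *: x + y) z = a * ip x z + ip y z;
  ip_conj : forall x y : H, ip y x = conjc (ip x y);
  ip_ge0 : forall x : H, 0 <= ip x x;
  ip_eq0 : forall x : H, ip x x = 0 -> x = 0;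
  ip_complete : forall u : nat -> H,
     (forall e : R, 0 < e -> exists n0 : nat, forall m n, (n0 <= m)%N -> (n0 <= n)%N ->
        hnorm (u m - u n) < e) ->
     exists l : H, forall e : R, 0 < e -> exists n0 : nat, forall n, (n0 <= n)%N ->
        hnorm (u n - l) < e }.

Definition bounded_op (T : H -> H) : Prop :=
  (forall (a : R[i]) (x y : H), T (a *: x + y) = a *: T x + T y) /\
  exists M : R, forall x : H, hnorm (T x) <= M * hnorm x.

Definition adj (T : H -> H) : H -> H :=
  epsilon (inhabits id) (fun S : H -> H => forall x y : H, ip (T x) y = ip x (S y)).

Definition opadd (S T : H -> H) : H -> H := fun x => S x + T x.
Definition opsub (S T : H -> H) : H -> H := fun x => S x - T x.
Definition opscale (a : R[i]) (T : H -> H) : H -> H := fun x => a *: T x.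
Definition opmul (S T : H -> H) : H -> H := fun x => S (T x).

Definition ReOp (T : H -> H) : H -> H := opscale (2^-1) (opadd T (adj T)).

Definition expi (t : R) : R[i] := (cos t +i* sin t)%C.

Record is_sa_algebra_norm (N : (H -> H) -> R) : Prop := IsSANorm {
  N_ge0 : forall X, bounded_op X -> 0 <= N X;
  N_eq0 : forall X, bounded_op X -> N X = 0 -> X = (fun _ => 0);
  N_scale : forall a X, bounded_op X -> N (opscale a X) = ComplexField.Normc.normc a * N X;
  N_triangle : forall X Y, bounded_op X -> bounded_op Y -> N (opadd X Y) <= N X + N Y;
  N_mul : forall X Y, bounded_op X -> bounded_op Y -> N (opmul X Y) <= N X * N Y;
  N_adj : forall X, bounded_op X -> N (adj X) = N X }.

Definition wN (N : (H -> H) -> R) (T : H -> H) : R :=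
  sup [set y : R | exists t : R, y = N (ReOp (opscale (expi t) T))].

Definition wNe (N : (H -> H) -> R) (B C : H -> H) : R :=
  sup [set y : R | exists (l1 l2 : R[i]) (t : R),
         ComplexField.Normc.normc l1 ^+ 2 + ComplexField.Normc.normc l2 ^+ 2 <= 1 /\
         y = N (ReOp (opscale (expi t) (opadd (opscale l1 B) (opscale l2 C))))].

End Hilbert.

(* Main.v *)
Require Import Defs.
From HB Require Import structures.
From mathcomp Require Import all_boot all_order all_algebra.
From mathcomp Require Import boolp classical_sets reals trigo.
From mathcomp Require Import complex.
From Stdlib Require Import ClassicalEpsilon.
From mathcomp Require Import ring lra.
Import Order.TTheory GRing.Theory Num.Theory.
Local Open Scope ring_scope.
Local Open Scope classical_set_scope.

Section IP.
Variables (R : realType) (H : lmodType R[i]) (ip : H -> H -> R[i]).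
Hypothesis hH : is_hilbert ip.

Lemma ipDl x y z : ip (x + y) z = ip x z + ip y z.
Proof. by rewrite -[x in LHS]scale1r (ip_linear hH) mul1r. Qed.

Lemma ip0l z : ip 0 z = 0.
Proof. by move: (ipDl 0 0 z); rewrite addr0 => /(congr1 (fun w => w - ip 0 z)); rewrite subrr addrK => <-. Qed.
Lemma ipZl a x z : ip (a *: x) z = a * ip x z.
Proof. by rewrite -[a *: x]addr0 (ip_linear hH) ip0l addr0. Qed.
Lemma ipNl x z : ip (- x) z = - ip x z.
Proof. by rewrite -scaleN1r ipZl mulN1r. Qed.
Lemma ipBl x y z : ip (x - y) z = ip x z - ip y z.
Proof. by rewrite ipDl ipNl. Qed.
Lemma ipDr x y z : ip z (x + y) = ip z x + ip z y.
Proof. by rewrite (ip_conj hH x z) (ip_conj hH y z) (ip_conj hH (x+y) z) ipDl rmorphD. Qed.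
Lemma ipZr a x z : ip z (a *: x) = conjc a * ip z x.
Proof. by rewrite (ip_conj hH x z) (ip_conj hH (a *: x) z) ipZl rmorphM. Qed.
Lemma ip0r z : ip z 0 = 0.
Proof. by rewrite -(scale0r (0:H)) ipZr rmorph0 mul0r. Qed.
Lemma ipNr x z : ip z (- x) = - ip z x.
Proof. by rewrite -scaleN1r ipZr rmorphN rmorph1 mulN1r. Qed.
Lemma ipBr x y z : ip z (x - y) = ip z x - ip z y.
Proof. by rewrite ipDr ipNr. Qed.

Definition nq x := complex.Re (ip x x).
Definition rp x y := complex.Re (ip x y).

Lemma ip_real x : ip x x = (nq x)%:C%C.
Proof.
have := ip_ge0 hH x; rewrite /nq; case: (ip x x) => a b.
by rewrite lecE /= => /andP[/eqP -> _].
Qed.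
Lemma nq_ge0 x : 0 <= nq x.
Proof. by have := ip_ge0 hH x; rewrite /nq; case: (ip x x) => a b; rewrite lecE => /andP[]. Qed.
Lemma nq_eq0 x : nq x = 0 -> x = 0.
Proof. by move=> h; apply: (ip_eq0 hH); rewrite ip_real h. Qed.
Lemma rpC x y : rp x y = rp y x.
Proof. by rewrite /rp (ip_conj hH x y); case: (ip x y). Qed.
Lemma nqD x y : nq (x + y) = nq x + 2 * rp x y + nq y.
Proof. rewrite /nq ipDl !ipDr (ip_conj hH x y) /rp; case: (ip x x) (ip x y) (ip y y) => ? ? [? ?] [? ?] /=; lra. Qed.

Definition hn x := Num.sqrt (nq x).
Lemma hnE x : hnorm ip x = hn x. Proof. by []. Qed.
Lemma hn_ge0 x : 0 <= hn x. Proof. exact: sqrtr_ge0. Qed.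
Lemma hn2 x : hn x ^+ 2 = nq x. Proof. by rewrite sqr_sqrtr // nq_ge0. Qed.


Lemma sqrt_le_of (a b : R) : 0 <= b -> a <= b ^+ 2 -> Num.sqrt a <= b.
Proof. by move=> hb hab; rewrite -(ger0_norm hb) -sqrtr_sqr ler_sqrt // sqr_ge0. Qed.
Lemma sqrt_lt_of (a b : R) : 0 <= a -> 0 <= b -> a < b ^+ 2 -> Num.sqrt a < b.
Proof.
move=> ha hb hab; have hb2 : 0 < b ^+ 2 by apply: le_lt_trans ha hab.
by rewrite -(ger0_norm hb) -sqrtr_sqr ltr_sqrt.
Qed.

Definition n2 (z : R[i]) := complex.Re z ^+ 2 + complex.Im z ^+ 2.
Lemma n2_ge0 z : 0 <= n2 z. Proof. by rewrite /n2 addr_ge0 ?sqr_ge0. Qed.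
Lemma n2_eq0 z : n2 z = 0 -> z = 0.
Proof. case: z => a b; rewrite /n2 /= => h; have ha : a = 0 by nra. have hb : b = 0 by nra. by rewrite ha hb. Qed.
Lemma normc_n2 z : ComplexField.Normc.normc z = Num.sqrt (n2 z). Proof. by case: z. Qed.

Lemma ipZZ a x : ip (a *: x) (a *: x) = (n2 a * nq x)%:C%C.
Proof. rewrite ipZl ipZr ip_real /n2; case: a => a b /=; apply/eqP; rewrite eq_complex /=; apply/andP; split; apply/eqP; ring. Qed.
Lemma nqZ a x : nq (a *: x) = n2 a * nq x.
Proof. by rewrite /nq ipZZ. Qed.
Lemma rpZr (t : R) x y : rp x (t%:C%C *: y) = t * rp x y.
Proof. by rewrite /rp ipZr; case: (ip x y) => a b /=; ring. Qed.
Lemma nqDZ (t : R) x y : nq (x + t%:C%C *: y) = nq x + 2 * t * rp x y + t ^+ 2 * nq y.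
Proof. by rewrite nqD rpZr nqZ /n2 /=; ring. Qed.
Lemma rp0r x : rp x 0 = 0. Proof. by rewrite /rp ip0r. Qed.

Lemma rCS x y : rp x y ^+ 2 <= nq x * nq y.
Proof.
have [hq|hq] := eqVneq (nq y) 0.
  by rewrite (nq_eq0 _ hq) rp0r expr0n /= mulr_ge0 ?nq_ge0.
have qp : 0 < nq y by rewrite lt_neqAle eq_sym hq nq_ge0.
set t := - (rp x y / nq y).
have h := nq_ge0 (x + t%:C%C *: y); rewrite nqDZ in h.
have e : nq x * nq y - rp x y ^+ 2 = nq y * (nq x + 2 * t * rp x y + t ^+ 2 * nq y).
  by rewrite /t; field.
rewrite -subr_ge0 e; exact: mulr_ge0 (ltW qp) h.
Qed.

Lemma cCS x y : n2 (ip x y) <= nq x * nq y.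
Proof.
have h := rCS (conjc (ip x y) *: x) y.
have e1 : rp (conjc (ip x y) *: x) y = n2 (ip x y) by rewrite /rp ipZl; case: (ip x y) => a b /=; rewrite /n2 /=; ring.
have e2 : nq (conjc (ip x y) *: x) = n2 (ip x y) * nq x by rewrite nqZ /n2; case: (ip x y) => a b /=; ring.
rewrite e1 e2 in h; have [->|hz] := eqVneq (n2 (ip x y)) 0; first by rewrite mulr_ge0 ?nq_ge0.
have hp : 0 < n2 (ip x y) by rewrite lt_neqAle eq_sym hz n2_ge0.
rewrite -mulrA expr2 ler_pM2l // in h.
Qed.

Lemma rp_le x y : rp x y <= hn x * hn y.
Proof.
have := rCS x y; rewrite -!hn2 -exprMn.
have : 0 <= hn x * hn y by rewrite mulr_ge0 ?hn_ge0.
move: (hn x * hn y) (rp x y) => s r; nra.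
Qed.

Lemma hn_triangle x y : hn (x + y) <= hn x + hn y.
Proof.
apply: sqrt_le_of; first by rewrite addr_ge0 ?hn_ge0.
rewrite nqD -!hn2; have := rp_le x y; nra.
Qed.


Lemma nqB x y : nq (x - y) = nq x - 2 * rp x y + nq y.
Proof. rewrite /nq ipBl !ipBr (ip_conj hH x y) /rp; case: (ip x x) (ip x y) (ip y y) => ? ? [? ?] [? ?] /=; lra. Qed.
Lemma rp_ge x y : - (hn x * hn y) <= rp x y.
Proof.
have := rCS x y; rewrite -!hn2 -exprMn.
have : 0 <= hn x * hn y by rewrite mulr_ge0 ?hn_ge0.
move: (hn x * hn y) (rp x y) => s r; nra.
Qed.
Lemma nq_lt_of x e : hn x < e -> nq x < e ^+ 2.
Proof. move=> h; rewrite -hn2; have := hn_ge0 x; nra. Qed.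

Lemma small_inv (c : R) : 0 < c -> exists k, forall n, (k <= n)%N -> (n.+1%:R : R)^-1 < c.
Proof.
move=> hc; have hc' : 0 <= c^-1 by rewrite invr_ge0 ltW.
exists (Num.bound c^-1) => n hn.
rewrite -[c]invrK ltf_pV2 ?posrE ?invr_gt0 ?ltr0Sn //.
apply: (lt_le_trans (archi_boundP hc')); rewrite ler_nat; exact: leqW.
Qed.

Lemma aux1 {w q M : R}: 0 < w -> q * (`|M|+1) < w -> w <= M * q -> 0 <= q -> False.
Proof.
move=> h1 h2 h3 h4; have : M * q <= `|M| * q by rewrite ler_wpM2r // ler_norm.
move: h2; move: `|M| => c; lra.
Qed.

Lemma aux2 {A V L d e e' r : R} : L = A^+2 - 2 * r + V^+2 -> -(A*V) <= r -> 0<=A -> 0<=V ->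
  A^+2 < d + e' -> V < e -> e' <= e -> e*(d+4) < L - d -> e <= 1 -> 0 <= d -> False.
Proof.
move=> hl2 hr hA hV h2 hv hnk hk' e1 d0.
have i1 : 2 * A * V <= (A ^+ 2 + 1) * V.
  have := mulr_ge0 (sqr_ge0 (A - 1)) hV; nra.
have i2 : (A ^+ 2 + 1) * V <= (d + 2) * e by nra.
have i3 : V ^+ 2 <= e by nra.
nra.
Qed.

Lemma riesz (f : H -> R[i]) (M : R) :
  (forall a x y, f (a *: x + y) = a * f x + f y) ->
  (forall x, n2 (f x) <= M * nq x) ->
  exists z, forall x, f x = ip x z.
Proof.
move=> flin fb.
have fD x y : f (x + y) = f x + f y by have := flin 1 x y; rewrite scale1r mul1r.
have f0 : f 0 = 0.
  by move: (fD 0 0); rewrite addr0 => /(congr1 (fun w => w - f 0)); rewrite subrr addrK => <-.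
have fZ a x : f (a *: x) = a * f x by rewrite -[a *: x]addr0 flin f0 addr0.
have fB x y : f (x - y) = f x - f y by rewrite -scaleN1r fD fZ mulN1r.
have [[x0 hx0]|nf] := pselect (exists x0, f x0 != 0); last first.
  exists 0 => x; rewrite ip0r; apply/eqP; apply/negPn/negP => h; apply: nf; by exists x.
pose E := [set r : R | exists x, f x = 1 /\ r = nq x]%classic.
have x1P : f ((f x0)^-1 *: x0) = 1 by rewrite fZ mulVf.
have Ene : E !=set0 by exists (nq ((f x0)^-1 *: x0)), ((f x0)^-1 *: x0).
have Elb : has_lbound E by exists 0 => r [x [_ ->]]; exact: nq_ge0.
have Einf : has_inf E by [].
set d := inf E.
have dle x : f x = 1 -> d <= nq x by move=> hx; apply: ge_inf => //; exists x.
have d0 : 0 <= d by apply: lb_le_inf => // r [x [_ ->]]; exact: nq_ge0.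
have useq : forall n : nat, exists x, f x = 1 /\ nq x < d + (n.+1%:R)^-1.
  move=> n; have hp : 0 < (n.+1%:R : R)^-1 by rewrite invr_gt0 ltr0Sn.
  have [e [x [hx ->]] he] := inf_adherent hp Einf.
  by exists x.
have [u hu] := choice (fun n x => f x = 1 /\ nq x < d + (n.+1%:R)^-1) useq.
have half1 : ((2:R)^-1)%:C%C * (1 + 1) = 1 :> R[i].
  by apply/eqP; rewrite eq_complex /=; apply/andP; split; apply/eqP; field.
have para x y : f x = 1 -> f y = 1 -> nq (x - y) <= 2 * nq x + 2 * nq y - 4 * d.
  move=> hx hy; set w := ((2:R)^-1)%:C%C *: (x + y).
  have hw : f w = 1 by rewrite fZ fD hx hy.
  have := dle _ hw; rewrite /w nqZ /n2 /= nqD nqB; lra.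
have cauchy : forall n m, nq (u n - u m) <= 2 * (n.+1%:R)^-1 + 2 * (m.+1%:R)^-1.
  move=> n m; have [h1 h2] := hu n; have [h3 h4] := hu m.
  have := para _ _ h1 h3; move: h2 h4; move: (n.+1%:R^-1) (m.+1%:R^-1) => a b; lra.
have cau : forall e, 0 < e -> exists n0 : nat, forall m n, (n0 <= m)%N -> (n0 <= n)%N ->
        hnorm ip (u m - u n) < e.
  move=> e he; have he4 : 0 < e ^+ 2 / 4 by rewrite divr_gt0 // exprn_gt0.
  have [k hk] := small_inv _ he4; exists k => m n hm hn; rewrite hnE.
  apply: sqrt_lt_of; [exact: nq_ge0 | exact: ltW |].
  have := cauchy m n; have := hk m hm; have := hk n hn.
  move: (m.+1%:R^-1) (n.+1%:R^-1) => a b; lra.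
have [l hl] := ip_complete hH cau.
have fl1 : f l = 1.
  have hd n : f (u n - l) = 1 - f l by rewrite fB (hu n).1.
  have [hw|hw] := eqVneq (n2 (1 - f l)) 0.
    by move/n2_eq0: hw => /eqP; rewrite subr_eq0 => /eqP <-.
  have wp : 0 < n2 (1 - f l) by rewrite lt_neqAle eq_sym hw n2_ge0.
  set w := n2 (1 - f l) in wp hw.
  have cp : 0 < `|M| + 1 by rewrite ltr_wpDl.
  have he : 0 < Num.sqrt (w / (`|M| + 1)) by rewrite sqrtr_gt0 divr_gt0.
  have [n0 hn0] := hl _ he; have := hn0 n0 (leqnn n0); rewrite hnE => /nq_lt_of.
  rewrite sqr_sqrtr ?divr_ge0 ?ltW // ltr_pdivlMr // => hq.
  have := fb (u n0 - l); rewrite hd -/w => hb.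
  exfalso; exact: (aux1 wp hq hb (nq_ge0 _)).
have hlmin : nq l <= d.
  rewrite leNgt; apply/negP => hgt.
  have gp : 0 < (nq l - d) / (d + 4) by apply: divr_gt0; lra.
  have [k hk] := small_inv _ gp.
  have ep : 0 < (k.+1%:R : R)^-1 by rewrite invr_gt0 ltr0Sn.
  have [n0 hn0] := hl _ ep.
  set n := maxn k n0.
  have hv := hn0 n (leq_maxr _ _); rewrite hnE in hv.
  have [_ h2] := hu n.
  have hnk : (n.+1%:R : R)^-1 <= (k.+1%:R)^-1.
    by rewrite lef_pV2 ?posrE ?ltr0Sn // ler_nat ltnS leq_maxl.
  have d4 : 0 < d + 4 by lra.
  have hk' := hk k (leqnn k); rewrite ltr_pdivlMr // in hk'.
  have e1 : (k.+1%:R : R)^-1 <= 1 by rewrite invf_le1 ?ltr0Sn // ler1n.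
  have hl2 : nq l = nq (u n - (u n - l)) by rewrite opprB addrC subrK.
  rewrite nqB -(hn2 (u n)) -(hn2 (u n - l)) in hl2.
  have hr := rp_ge (u n) (u n - l).
  rewrite -hn2 in h2.
  exact: (aux2 hl2 hr (hn_ge0 _) (hn_ge0 _) h2 hv hnk hk' e1 d0).
have orth k : f k = 0 -> ip l k = 0.
  move=> hk; set q := nq k.
  have qp : 0 <= q := nq_ge0 k.
  set t := (q + 1)^-1.
  have tp : 0 < t by rewrite invr_gt0 ltr_wpDl.
  have tq : t * (q + 1) = 1 by rewrite mulVf // gt_eqF // ltr_wpDl.
  set s := (- t)%:C%C * ip l k.
  have hs : f (l + s *: k) = 1 by rewrite fD fZ hk mulr0 addr0.
  have := le_trans hlmin (dle _ hs); rewrite nqD nqZ.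
  have -> : rp l (s *: k) = - t * n2 (ip l k).
    by rewrite /rp ipZr /s; case: (ip l k) => a b /=; rewrite /n2 /=; ring.
  have -> : n2 s = t ^+ 2 * n2 (ip l k).
    by rewrite /s; case: (ip l k) => a b /=; rewrite /n2 /=; ring.
  have wp := n2_ge0 (ip l k).
  move=> h.
  have h' : 0 <= t * (t * n2 (ip l k) * q - 2 * n2 (ip l k)) by rewrite -/q in h; lra.
  rewrite pmulr_rge0 // in h'.
  have : n2 (ip l k) <= 0 by nra.
  move=> h0; apply: n2_eq0; apply/eqP; by rewrite eq_le h0 wp.
have nl : nq l != 0.
  apply/eqP => /nq_eq0 l0; move: fl1; rewrite l0 f0 => /eqP; by rewrite eq_sym oner_eq0.
exists ((nq l)^-1%:C%C *: l); move=> x.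
have hk : f (x - f x *: l) = 0 by rewrite fB fZ fl1 mulr1 subrr.
have := orth _ hk; rewrite (ip_conj hH (x - f x *: l) l).
move/(congr1 conjc); rewrite conjcK conjc0 ipBl ipZl ip_real => /eqP; rewrite subr_eq0 => /eqP hx.
rewrite ipZr conjc_real hx mulrCA -rmorphM mulVf // rmorph1 mulr1 //.
Qed.


Lemma hnZ a x : hn (a *: x) = ComplexField.Normc.normc a * hn x.
Proof. by rewrite /hn nqZ sqrtrM ?n2_ge0 // normc_n2. Qed.
Lemma normc_ge0 (a : R[i]) : 0 <= ComplexField.Normc.normc a.
Proof. by rewrite normc_n2 sqrtr_ge0. Qed.

Lemma aux_sq {a b : R} : 0 <= a -> a <= b -> a ^+ 2 <= b ^+ 2.
Proof. move=> h1 h2; nra. Qed.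
Lemma aux_div {a b c : R} : 0 <= a -> 0 <= b -> 0 <= c -> a ^+ 2 <= c * a * b -> a <= c * b.
Proof.
move=> h1 h2 h3 h4; have [->|ha] := eqVneq a 0; first by rewrite mulr_ge0.
have ap : 0 < a by rewrite lt_neqAle eq_sym ha h1.
have e : a * (c * b) = c * a * b by ring.
by rewrite -(ler_pM2l ap) e -expr2.
Qed.

Definition Adj (X S : H -> H) := forall x y, ip (X x) y = ip x (S y).

Lemma ip_ext u v : (forall x, ip x u = ip x v) -> u = v.
Proof.
move=> h; apply/eqP; rewrite -subr_eq0; apply/eqP; apply: (ip_eq0 hH).
by rewrite ipBr h subrr.
Qed.

Lemma adj_exists X : bounded_op ip X -> exists S, Adj X S.
Proof.
move=> [lin [M hM]].
have hy : forall y, exists z, forall x, ip (X x) y = ip x z.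
  move=> y; apply: (@riesz (fun x => ip (X x) y) (M ^+ 2 * nq y)).
    by move=> a x x'; rewrite lin (ip_linear hH).
  move=> x; apply: le_trans (cCS _ _) _.
  rewrite mulrAC ler_wpM2r ?nq_ge0 // -!hn2 -exprMn; apply: aux_sq; first exact: hn_ge0.
  exact: hM.
have [S hS] := choice _ hy; by exists S => x y; apply: hS.
Qed.

Lemma adjP X : bounded_op ip X -> Adj X (adj ip X).
Proof.
move=> hX; rewrite /adj; apply: (ClassicalEpsilon.epsilon_spec (inhabits id) (fun S => forall x y, ip (X x) y = ip x (S y))).
exact: adj_exists.
Qed.

Lemma adj_uniq X S S' : Adj X S -> Adj X S' -> S = S'.
Proof. by move=> h1 h2; apply: funext => y; apply: ip_ext => x; rewrite -h1 -h2. Qed.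

Lemma adj_eq X S : bounded_op ip X -> Adj X S -> adj ip X = S.
Proof. by move=> hX hS; exact: adj_uniq _ _ _ (adjP _ hX) hS. Qed.

Lemma adj_bounded X : bounded_op ip X -> bounded_op ip (adj ip X).
Proof.
move=> hX; have hA := adjP _ hX; have [lin [M hM]] := hX; split.
  by move=> a x y; apply: ip_ext => z; rewrite -hA !ipDr !ipZr -!hA.
exists `|M| => y; rewrite !hnE; apply: aux_div; rewrite ?hn_ge0 ?normr_ge0 //.
rewrite hn2 /nq -hA; apply: le_trans (rp_le _ _) _.
apply: ler_wpM2r; first exact: hn_ge0.
apply: le_trans (hM _) _; apply: ler_wpM2r; [exact: hn_ge0 | exact: ler_norm].
Qed.

Lemma bounded_add X Y : bounded_op ip X -> bounded_op ip Y -> bounded_op ip (opadd X Y).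
Proof.
move=> [l1 [M1 h1]] [l2 [M2 h2]]; split.
  by move=> a x y; rewrite /opadd l1 l2 scalerDr addrACA.
exists (M1 + M2) => x; rewrite !hnE /opadd; apply: le_trans (hn_triangle _ _) _.
by rewrite mulrDl lerD // -hnE.
Qed.

Lemma bounded_scale a X : bounded_op ip X -> bounded_op ip (opscale a X).
Proof.
move=> [l1 [M1 h1]]; split.
  by move=> b x y; rewrite /opscale l1 scalerDr !scalerA mulrC.
exists (ComplexField.Normc.normc a * M1) => x; rewrite !hnE /opscale hnZ -mulrA.
by apply: ler_wpM2l; [exact: normc_ge0 | exact: h1].
Qed.

Lemma bounded_mul X Y : bounded_op ip X -> bounded_op ip Y -> bounded_op ip (opmul X Y).
Proof.
move=> [l1 [M1 h1]] [l2 [M2 h2]]; split.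
  by move=> a x y; rewrite /opmul l2 l1.
exists (`|M1| * M2) => x; rewrite !hnE /opmul.
apply: le_trans (h1 _) _; apply: le_trans (_ : `|M1| * hn (Y x) <= _).
  by apply: ler_wpM2r; [exact: hn_ge0 | exact: ler_norm].
by rewrite -mulrA; apply: ler_wpM2l; [exact: normr_ge0 | exact: h2].
Qed.

End IP.

Section T.
Variable R : realType.
Lemma normc_half : ComplexField.Normc.normc (2^-1 : R[i]) = 2^-1.
Proof. rewrite ComplexField.Normc.normcV.
have -> : (2 : R[i]) = (2:R)%:C%C by apply/eqP; rewrite eq_complex /=; apply/andP; split; apply/eqP; ring.
by rewrite /= expr0n /= addr0 sqrtr_sqr ger0_norm.
Qed.
Lemma normc_expi t : ComplexField.Normc.normc (expi t : R[i]) = 1.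
Proof. by rewrite /expi /= cos2Dsin2 sqrtr1. Qed.
Lemma expi0 : expi (0:R) = 1.
Proof. apply/eqP; rewrite /expi eq_complex /=. by rewrite cos0 sin0 !eqxx. Qed.
Lemma expim : expi (- (pi / 2) : R) = - 'i%C.
Proof. apply/eqP; rewrite /expi eq_complex /=. by rewrite cosN sinN cos_pihalf sin_pihalf oppr0 !eqxx. Qed.
End T.

Arguments adjP {R H ip} hH X _.
Arguments adj_eq {R H ip} hH X S _ _.
Arguments adj_bounded {R H ip} hH X _.
Arguments bounded_add {R H ip} hH X Y _ _.
Arguments bounded_scale {R H ip} hH a X _.
Arguments bounded_mul {R H ip} X Y _ _.
Arguments ipZl {R H ip} hH a x z.
Arguments ipZr {R H ip} hH a x z.
Arguments ipDl {R H ip} hH x y z.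
Arguments ipDr {R H ip} hH x y z.
Arguments normc_ge0 {R}.

Section Main.
Variables (R : realType) (H : lmodType R[i]) (ip : H -> H -> R[i]).
Hypothesis hH : is_hilbert ip.
Variable N : (H -> H) -> R.
Hypothesis hN : is_sa_algebra_norm ip N.
Local Notation Bd := (bounded_op ip).

Lemma adj_scale a X : Bd X -> adj ip (opscale a X) = opscale (conjc a) (adj ip X).
Proof.
move=> hX; apply: (adj_eq hH); first exact: (bounded_scale hH).
by move=> x y; rewrite /opscale (ipZl hH) (ipZr hH) conjcK (adjP hH X hX).
Qed.

Lemma adj_add X Y : Bd X -> Bd Y -> adj ip (opadd X Y) = opadd (adj ip X) (adj ip Y).
Proof.
move=> hX hY; apply: (adj_eq hH); first exact: (bounded_add hH).
by move=> x y; rewrite /opadd (ipDl hH) (ipDr hH) (adjP hH X hX) (adjP hH Y hY).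
Qed.

Lemma bd_Re X : Bd X -> Bd (ReOp ip X).
Proof. move=> hX; apply: (bounded_scale hH); apply: (bounded_add hH) => //; exact: (adj_bounded hH). Qed.

Lemma N_Re X : Bd X -> N (ReOp ip X) <= N X.
Proof.
move=> hX; have hA := adj_bounded hH X hX.
rewrite /ReOp (N_scale hN) ?normc_half; last exact: (bounded_add hH).
have := N_triangle hN hX hA; rewrite (N_adj hN hX); have := N_ge0 hN hX.
move: (N (opadd X (adj ip X))) (N X) => a b; lra.
Qed.

Lemma N_eRe X t : Bd X -> N (ReOp ip (opscale (expi t) X)) <= N X.
Proof.
move=> hX; apply: le_trans (N_Re _ (bounded_scale hH _ _ hX)) _.
by rewrite (N_scale hN) // normc_expi mul1r.
Qed.

Lemma wN_ub X t : Bd X -> N (ReOp ip (opscale (expi t) X)) <= wN ip N X.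
Proof.
move=> hX; apply: ub_le_sup; last by exists t.
by exists (N X) => y [s ->]; exact: N_eRe.
Qed.

Lemma wN_le X : Bd X -> wN ip N X <= N X.
Proof.
move=> hX; apply: ge_sup; first by exists (N (ReOp ip (opscale (expi 0) X))), 0.
by move=> y [s ->]; exact: N_eRe.
Qed.

Lemma wN_ge0 X : Bd X -> 0 <= wN ip N X.
Proof.
move=> hX; apply: le_trans (wN_ub _ 0 hX).
apply: (N_ge0 hN); apply: bd_Re; exact: (bounded_scale hH).
Qed.


Lemma two_C : (2 : R[i]) = (2:R)%:C%C.
Proof. by apply/eqP; rewrite eq_complex /=; apply/andP; split; apply/eqP; ring. Qed.
Lemma half_C : (2^-1 : R[i]) = (2^-1:R)%:C%C.
Proof. by rewrite two_C fmorphV. Qed.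

Lemma decompX X : Bd X -> X = opadd (ReOp ip (opscale (expi 0) X))
   (opscale 'i%C (ReOp ip (opscale (expi (- (pi / 2))) X))).
Proof.
move=> hX; apply: funext => x.
rewrite /ReOp !adj_scale // expi0 expim /opadd /opscale.
rewrite !scalerDr !scalerA addrACA -!scalerDl half_C.
have -> : ((2^-1)%:C%C * 1 + 'i%C * (2^-1)%:C%C * - 'i%C) = 1 :> R[i].
  by apply/eqP; rewrite eq_complex /=; apply/andP; split; apply/eqP; field.
have -> : ((2^-1)%:C%C * conjc 1 + 'i%C * (2^-1)%:C%C * conjc (- 'i%C)) = 0 :> R[i].
  by apply/eqP; rewrite eq_complex /=; apply/andP; split; apply/eqP; field.
by rewrite scale1r scale0r addr0.
Qed.

Lemma N_le_2wN X : Bd X -> N X <= 2 * wN ip N X.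
Proof.
move=> hX; rewrite {1}(decompX _ hX).
have h0 := bd_Re _ (bounded_scale hH (expi 0) _ hX).
have h1 := bd_Re _ (bounded_scale hH (expi (- (pi / 2))) _ hX).
apply: le_trans (N_triangle hN h0 (bounded_scale hH 'i%C _ h1)) _.
rewrite (N_scale hN) //.
have -> : ComplexField.Normc.normc ('i%C : R[i]) = 1 by rewrite /= expr0n expr1n add0r sqrtr1.
rewrite mul1r; have := wN_ub _ 0 hX; have := wN_ub _ (- (pi / 2)) hX; lra.
Qed.

Lemma ReOp_add X Y : Bd X -> Bd Y -> ReOp ip (opadd X Y) = opadd (ReOp ip X) (ReOp ip Y).
Proof.
move=> hX hY; apply: funext => x; rewrite /ReOp adj_add // /opscale /opadd.
by rewrite -scalerDr addrACA.
Qed.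

Lemma ReOp_N1 X : Bd X -> ReOp ip (opscale (-1) X) = opscale (-1) (ReOp ip X).
Proof.
move=> hX; apply: funext => x; rewrite /ReOp adj_scale // /opscale /opadd rmorphN1.
by rewrite -scalerDr !scalerA mulrC.
Qed.

Lemma wN_add X Y : Bd X -> Bd Y -> wN ip N (opadd X Y) <= wN ip N X + wN ip N Y.
Proof.
move=> hX hY; apply: ge_sup; first by exists (N (ReOp ip (opscale (expi 0) (opadd X Y)))), 0.
move=> y [t ->].
have -> : opscale (expi t) (opadd X Y) = opadd (opscale (expi t) X) (opscale (expi t) Y).
  by apply: funext => x; rewrite /opscale /opadd scalerDr.
have hX' := bounded_scale hH (expi t) _ hX; have hY' := bounded_scale hH (expi t) _ hY.
rewrite ReOp_add //; apply: le_trans (N_triangle hN (bd_Re _ hX') (bd_Re _ hY')) _.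
by apply: lerD; apply: wN_ub.
Qed.

Lemma normcN1 : ComplexField.Normc.normc (-1 : R[i]) = 1.
Proof. by rewrite /= sqrrN expr1n oppr0 expr0n addr0 sqrtr1. Qed.

Lemma wN_N1 Y : Bd Y -> wN ip N (opscale (-1) Y) <= wN ip N Y.
Proof.
move=> hY; apply: ge_sup; first by exists (N (ReOp ip (opscale (expi 0) (opscale (-1) Y)))), 0.
move=> y [t ->].
have -> : opscale (expi t) (opscale (-1) Y) = opscale (-1) (opscale (expi t) Y).
  by apply: funext => x; rewrite /opscale !scalerA mulrC.
have hY' := bounded_scale hH (expi t) _ hY.
rewrite ReOp_N1 // (N_scale hN) ?normcN1 ?mul1r; last exact: bd_Re.
exact: wN_ub.
Qed.

Lemma opsubE (B C : H -> H) : opsub B C = opadd B (opscale (-1) C).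
Proof. by apply: funext => x; rewrite /opsub /opadd /opscale scaleN1r. Qed.


Lemma W_elem_le B C l1 l2 t : Bd B -> Bd C ->
  ComplexField.Normc.normc l1 ^+ 2 + ComplexField.Normc.normc l2 ^+ 2 <= 1 ->
  N (ReOp ip (opscale (expi t) (opadd (opscale l1 B) (opscale l2 C)))) <= N B + N C.
Proof.
move=> hB hC hl.
have hB' := bounded_scale hH l1 _ hB; have hC' := bounded_scale hH l2 _ hC.
apply: le_trans (N_eRe _ t (bounded_add hH _ _ hB' hC')) _.
apply: le_trans (N_triangle hN hB' hC') _.
rewrite !(N_scale hN) //.
have := normc_ge0 l1; have := normc_ge0 l2; have := N_ge0 hN hB; have := N_ge0 hN hC.
move: hl; move: (ComplexField.Normc.normc l1) (ComplexField.Normc.normc l2) (N B) (N C) => p q b c.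
move=> hl h1 h2 h3 h4.
have p1 : p <= 1 by nra.
have q1 : q <= 1 by nra.
nra.
Qed.

Lemma wN_le_W B C : Bd B -> Bd C -> wN ip N B <= wNe ip N B C /\ wN ip N C <= wNe ip N B C.
Proof.
move=> hB hC.
have hub : has_ubound [set y : R | exists (l1 l2 : R[i]) (t : R),
         ComplexField.Normc.normc l1 ^+ 2 + ComplexField.Normc.normc l2 ^+ 2 <= 1 /\
         y = N (ReOp ip (opscale (expi t) (opadd (opscale l1 B) (opscale l2 C))))].
  by exists (N B + N C) => z [l1 [l2 [s [hl ->]]]]; exact: W_elem_le.
have n1 : ComplexField.Normc.normc (1 : R[i]) = 1 by exact: ComplexField.Normc.normc1.
have n0 : ComplexField.Normc.normc (0 : R[i]) = 0 by exact: ComplexField.Normc.normc0.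
split.
  apply: ge_sup; first by exists (N (ReOp ip (opscale (expi 0) B))), 0.
  move=> y [t ->]; apply: (ub_le_sup hub); exists 1, 0, t; split.
    by rewrite n1 n0 expr1n expr0n addr0.
  congr (N (ReOp ip _)); apply: funext => x.
  by rewrite /opscale /opadd scale1r scale0r addr0.
apply: ge_sup; first by exists (N (ReOp ip (opscale (expi 0) C))), 0.
move=> y [t ->]; apply: (ub_le_sup hub); exists 0, 1, t; split.
  by rewrite n1 n0 expr1n expr0n add0r.
congr (N (ReOp ip _)); apply: funext => x.
by rewrite /opscale /opadd scale1r scale0r add0r.
Qed.

Lemma aux_final {P a c s W : R} : 0 <= a -> 0 <= c -> P <= 4 * a ^+ 2 + 4 * c ^+ 2 ->
  s <= a + c -> a <= W -> c <= W -> 8^-1 * P + 2^-1 * s * `|a - c| <= W ^+ 2.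
Proof.
move=> ha hc hP hs haW hcW.
have [h|h] := leP a c.
  rewrite ler0_norm ?subr_le0 //.
  have : s * (c - a) <= (a + c) * (c - a) by rewrite ler_wpM2r // subr_ge0.
  have : c ^+ 2 <= W ^+ 2 by nra.
  lra.
rewrite ger0_norm; last by rewrite subr_ge0 ltW.
have : s * (a - c) <= (a + c) * (a - c) by rewrite ler_wpM2r // subr_ge0 ltW.
have : a ^+ 2 <= W ^+ 2 by nra.
lra.
Qed.

Lemma main_ineq B C : Bd B -> Bd C ->
  8^-1 * N (opadd (opmul (adj ip C) C) (opmul (adj ip B) B))
  + 2^-1 * Num.max (wN ip N (opadd B C)) (wN ip N (opsub B C)) * `|wN ip N B - wN ip N C|
  <= wNe ip N B C ^+ 2.
Proof.
move=> hB hC.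
have hAB := adj_bounded hH B hB; have hAC := adj_bounded hH C hC.
have hMB := bounded_mul _ _ hAB hB; have hMC := bounded_mul _ _ hAC hC.
have hP : N (opadd (opmul (adj ip C) C) (opmul (adj ip B) B)) <= N C ^+ 2 + N B ^+ 2.
  apply: le_trans (N_triangle hN hMC hMB) _.
  apply: lerD; rewrite expr2; apply: le_trans (N_mul hN hAC hC) _ || apply: le_trans (N_mul hN hAB hB) _;
    by rewrite (N_adj hN).
have h2B := N_le_2wN _ hB; have h2C := N_le_2wN _ hC.
have n0B := N_ge0 hN hB; have n0C := N_ge0 hN hC.
have a0 := wN_ge0 _ hB; have c0 := wN_ge0 _ hC.
have hC' := bounded_scale hH (-1) _ hC.
have hs : Num.max (wN ip N (opadd B C)) (wN ip N (opsub B C)) <= wN ip N B + wN ip N C.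
  rewrite ge_max wN_add // opsubE /=.
  apply: le_trans (wN_add _ _ hB hC') _.
  by rewrite lerD2l wN_N1.
have [hWB hWC] := wN_le_W _ _ hB hC.
apply: (aux_final a0 c0 _ hs hWB hWC).
move: hP h2B h2C n0B n0C a0 c0; move: (N (opadd _ _)) (N B) (N C) (wN ip N B) (wN ip N C) => p b c x y.
move=> *; nra.
Qed.

End Main.

Theorem corollary2p18 (R : realType) (H : lmodType R[i]) (ip : H -> H -> R[i])
  (hH : is_hilbert ip) (N : (H -> H) -> R) (hN : is_sa_algebra_norm ip N)
  (B C : H -> H) (hB : bounded_op ip B) (hC : bounded_op ip C) :
  8^-1 * N (opadd (opmul (adj ip C) C) (opmul (adj ip B) B))
  + 2^-1 * Num.max (wN ip N (opadd B C)) (wN ip N (opsub B C)) * `|wN ip N B - wN ip N C|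
  <= wNe ip N B C ^+ 2.
Proof. exact: (@main_ineq R H ip hH N hN B C hB hC). Qed.
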